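(* A weighted game $\mathcal G$ is divergent if and only if, in each strongly connected component of the graph of $\mathcal G$, the simple cycles are either all of positive weight or all of negative weight.
   Context: A weighted game is a tuple $\langle V=V_{\mathrm{Min}}\uplus V_{\mathrm{Max}}, V_T, A, E, \omega\rangle$ with vertices $V$ split between two players, targets $V_T\subseteq V_{\mathrm{Min}}$, alphabet $A$, edges $E\subseteq V\times A\times V$ and weights $\omega\colon E\to\mathbb Z$; its graph is the directed graph $(V,E)$ (strongly connected components do not depend on the partition of vertices between players). A cycle is a finite sequence of consecutive edges $v_0\xrightarrow{a_0}v_1\cdots\xrightarrow{a_{k-1}}v_k$ with $k\geq 1$ and $v_k=v_0$; its weight is the sum of the weights of its edges; it is simple if no vertex is visited twice except $v_0=v_k$. The game is divergent if every cycle has nonzero weight. *)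

(* Defs.v *)
From mathcomp Require Import all_boot all_order all_algebra.
Set Implicit Arguments. Unset Strict Implicit. Unset Printing Implicit Defensive.
Import Order.TTheory GRing.Theory Num.Theory.
Local Open Scope ring_scope.

(* A (finite) weighted game <V = V_Min ⊎ V_Max, V_T, A, E, ω>.
   V_Max is the complement of V_Min; weights are given on all triples but only
   those on edges matter. *)
Record wgame (V A : finType) := WGame {
  vmin : {set V};
  vtarget : {set V};
  edges : {set V * A * V};
  weight : V * A * V -> int;
}.

Definition vmax (V A : finType) (G : wgame V A) : {set V} := ~: vmin G.

Definition wgame_wf (V A : finType) (G : wgame V A) : Prop :=
  vtarget G \subset vmin G.

Definition esrc (V A : finType) (e : V * A * V) : V := e.1.1.
Definition edst (V A : finType) (e : V * A * V) : V := e.2.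

Definition grel_of (V A : finType) (G : wgame V A) : rel V :=
  fun u v => [exists a : A, (u, a, v) \in edges G].

Fixpoint consecutive (V A : finType) (c : seq (V * A * V)) : bool :=
  match c with
  | e1 :: ((e2 :: _) as c') => (edst e1 == esrc e2) && consecutive c'
  | _ => true
  end.

Definition is_cycle (V A : finType) (G : wgame V A) (c : seq (V * A * V)) : bool :=
  match c with
  | [::] => false
  | e0 :: _ => all (fun e => e \in edges G) c && consecutive c
               && (edst (last e0 c) == esrc e0)
  end.

Definition is_simple_cycle (V A : finType) (G : wgame V A) (c : seq (V * A * V)) : bool :=
  is_cycle G c && uniq (map (@esrc V A) c).

Definition cycle_weight (V A : finType) (G : wgame V A) (c : seq (V * A * V)) : int :=
  \sum_(e <- c) weight G e.

Definition divergent (V A : finType) (G : wgame V A) : Prop :=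
  forall c, is_cycle G c -> cycle_weight G c != 0.

Definition same_scc (V A : finType) (G : wgame V A) (u v : V) : bool :=
  connect (grel_of G) u v && connect (grel_of G) v u.

Definition cycle_in_scc (V A : finType) (G : wgame V A) (v : V) (c : seq (V * A * V)) : bool :=
  all (fun e => same_scc G v (esrc e)) c.

(* Main.v *)
Require Import Defs.
From mathcomp Require Import all_boot all_order all_algebra.
From mathcomp Require Import ring zify.
From Stdlib Require Import Classical.
Set Implicit Arguments. Unset Strict Implicit. Unset Printing Implicit Defensive.
Import Order.TTheory GRing.Theory Num.Theory.
Local Open Scope ring_scope.

Fixpoint walk (V A : finType) (G : wgame V A) (x : V) (W : seq (V * A * V)) (y : V) : bool :=
  match W with
  | [::] => x == y
  | e :: W' => [&& e \in edges G, esrc e == x & walk G (edst e) W' y]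
  end.

Lemma walk_cat (V A : finType) (G : wgame V A) x y z W1 W2 :
  walk G x W1 y -> walk G y W2 z -> walk G x (W1 ++ W2) z.
Proof.
elim: W1 x => [|e W1 IH] x /=; first by move/eqP ->.
by case/and3P => -> -> H1 H2; rewrite (IH _ H1 H2).
Qed.

Lemma walk_catP (V A : finType) (G : wgame V A) x z W1 W2 :
  walk G x (W1 ++ W2) z -> exists y, walk G x W1 y /\ walk G y W2 z.
Proof.
elim: W1 x => [|e W1 IH] x /=; first by move=> H; exists x; rewrite eqxx.
case/and3P => He Hx /IH [y [H1 H2]]; exists y; by rewrite He Hx H1.
Qed.

Lemma wcat (V A : finType) (G : wgame V A) W1 W2 :
  cycle_weight G (W1 ++ W2) = cycle_weight G W1 + cycle_weight G W2.
Proof. by rewrite /cycle_weight big_cat. Qed.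

Lemma cycle_walkE (V A : finType) (G : wgame V A) e c y :
  [&& all (fun e => e \in edges G) (e :: c), consecutive (e :: c)
   & edst (last e c) == y] = walk G (esrc e) (e :: c) y.
Proof.
elim: c e => [|e1 c IH] e /=; first by rewrite eqxx !andbT.
rewrite eqxx /=. have := IH e1. rewrite /= eqxx /=.
rewrite (eq_sym (esrc e1)).
case: c {IH} => [|e2 c] /=;
by case: (e \in edges G); case: (e1 \in edges G); case: (edst e == esrc e1);
  rewrite /= ?andbF //; case: (walk _ _ _ _) => // ->.
Qed.

Lemma walk_cycle (V A : finType) (G : wgame V A) s W :
  walk G s W s -> W != [::] -> is_cycle G W.
Proof.
case: W => [//|e c] Hw _.
have Hs : esrc e = s by move: Hw => /= /and3P[_ /eqP]. 
rewrite /is_cycle -andbA cycle_walkE Hs //.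
Qed.

Lemma walk_connect (V A : finType) (G : wgame V A) x W y :
  walk G x W y -> connect (grel_of G) x y.
Proof.
elim: W x => [|[[u a] w] W IH] x /=; first by move/eqP ->.
case/and3P => He /eqP Hx Hw; rewrite /esrc /= in Hx; subst u.
apply: connect_trans (IH _ Hw); apply: connect1.
by apply/existsP; exists a.
Qed.

Lemma connect_walk (V A : finType) (G : wgame V A) x y :
  connect (grel_of G) x y -> exists W, walk G x W y.
Proof.
case/connectP => p Hp ->.
elim: p x Hp => [|z p IH] x /=; first by exists [::]; rewrite /= eqxx.
case/andP => /existsP [a Ha] Hp.
have [W HW] := IH _ Hp.
by exists ((x, a, z) :: W); rewrite /= Ha eqxx HW.
Qed.

Lemma walk_scc (V A : finType) (G : wgame V A) s W :
  walk G s W s -> cycle_in_scc G s W.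
Proof.
move=> Hw; apply/allP => e He.
case/splitPr: He Hw => p1 p2 /walk_catP [z [H1 H2]].
move: (H2) => /= /and3P [_ /eqP Hz _].
by rewrite /same_scc Hz (walk_connect H1) (walk_connect H2).
Qed.

Lemma spl (V A : finType) (G : wgame V A) x W y z :
  walk G x W y -> z \in map (@esrc V A) W ->
  exists W1 W2, [/\ W = W1 ++ W2, W2 != [::], walk G x W1 z & walk G z W2 y].
Proof.
elim: W x => [//|e W IH] x /= /and3P[He /eqP Hx Hw]; subst x.
rewrite in_cons => /orP[/eqP ->|Hz].
  by exists [::], (e :: W); rewrite /= He !eqxx Hw.
have [W1 [W2 [-> Hn H1 H2]]] := IH _ Hw Hz.
by exists (e :: W1), W2; split => //=; rewrite He eqxx H1.
Qed.

Lemma dec (V A : finType) (G : wgame V A) x W y :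
  walk G x W y -> ~~ uniq (map (@esrc V A) W) ->
  exists W1 W2 W3 z, [/\ W = W1 ++ W2 ++ W3, (W2 != [::]) && (W1 ++ W3 != [::]), walk G x W1 z,
                         walk G z W2 z & walk G z W3 y].
Proof.
elim: W x => [//|e W IH] x /= /and3P[He /eqP Hx Hw]; subst x.
rewrite negb_and negbK => /orP[Hin|Hnu].
  have [A1 [B [-> HnB HA HB]]] := spl Hw Hin.
  exists [::], (e :: A1), B, (esrc e); split => //=; by rewrite ?He ?eqxx ?HA ?HnB.
have [W1 [W2 [W3 [z [-> /andP[Hne Hne'] H1 H2 H3]]]]] := IH _ Hw Hnu.
exists (e :: W1), W2, W3, z; split => //=; by rewrite ?He ?eqxx ?H1 ?Hne.
Qed.

Lemma pos_gen (V A : finType) (G : wgame V A) (P : int -> Prop)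
  (HP : forall a b, P a -> P b -> P (a + b)) v
  (H : forall c, is_simple_cycle G c -> cycle_in_scc G v c -> P (cycle_weight G c)) :
  forall n W s, (size W < n)%N -> walk G s W s -> cycle_in_scc G v W -> W != [::] ->
  P (cycle_weight G W).
Proof.
elim=> [//|n IH] W s Hsz Hw Hin Hne.
case Hu: (uniq (map (@esrc V A) W)).
  by apply: H => //; rewrite /is_simple_cycle Hu andbT (walk_cycle Hw Hne).
have [W1 [W2 [W3 [z [HW /andP[Hne2 Hne13] H1 H2 H3]]]]] := dec Hw (negbT Hu).
have H13pos : (0 < size W1 + size W3)%N by rewrite -size_cat; case: (W1 ++ W3) Hne13.
have Hsub : forall W', {subset W' <= W} -> cycle_in_scc G v W'.
  by move=> W' Hs; apply/allP => e He; apply: (allP Hin); apply: Hs.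
have E : cycle_weight G W = cycle_weight G W2 + cycle_weight G (W1 ++ W3).
  by rewrite HW !wcat addrCA.
have H2pos : (0 < size W2)%N by case: (W2) Hne2.
rewrite HW !size_cat in Hsz.
have P2 : P (cycle_weight G W2).
  apply: (IH W2 z) => //; first by move: Hsz H13pos; clear; lia.
  by apply: Hsub => e He; rewrite HW !mem_cat He orbT.
rewrite E; case E13: (W1 ++ W3) => [|e' W13].
  by rewrite /cycle_weight big_nil addr0.
rewrite -E13; apply: HP => //; apply: (IH _ s).
- rewrite size_cat; move: Hsz H2pos; clear; lia.
- exact: walk_cat H1 H3.
- apply: Hsub => e; rewrite HW !mem_cat => /orP [->|->] //; by rewrite !orbT.
- by rewrite E13.
Qed.

Definition rep (T : Type) n (W : seq T) := flatten (nseq n W).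

Lemma rep_walk (V A : finType) (G : wgame V A) s W n :
  walk G s W s -> walk G s (rep n W) s.
Proof. move=> Hw; elim: n => [|n IH] /=; [exact: eqxx | exact: walk_cat Hw IH]. Qed.

Lemma rep_weight (V A : finType) (G : wgame V A) W n :
  cycle_weight G (rep n W) = cycle_weight G W *+ n.
Proof.
elim: n => [|n IH]; first by rewrite /cycle_weight big_nil.
by rewrite /rep /= -/(rep n W) wcat IH mulrS.
Qed.

Lemma signlem (a b : int) : a * b <= 0 -> a *+ `|b|%N + b *+ `|a|%N = 0.
Proof.
move=> H. rewrite -[a *+ _]mulr_natr -[b *+ _]mulr_natr !natz !abszE.
case: (ltgtP a 0) => Ha; last by rewrite Ha normr0; ring.
- case: (ltgtP b 0) => Hb; last by rewrite Hb normr0; ring.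
  + have Hab : 0 < a * b by rewrite nmulr_rgt0.
    by move: (lt_le_trans Hab H); rewrite ltxx.
  + rewrite (ltr0_norm Ha) (gtr0_norm Hb); ring.
- case: (ltgtP b 0) => Hb; last by rewrite Hb normr0; ring.
  + rewrite (gtr0_norm Ha) (ltr0_norm Hb); ring.
  + by move: (lt_le_trans (mulr_gt0 Ha Hb) H); rewrite ltxx. 
Qed.

Lemma zero_lem (V A : finType) (G : wgame V A) s W1 W2 :
  divergent G -> walk G s W1 s -> walk G s W2 s -> W1 != [::] -> W2 != [::] ->
  cycle_weight G W1 * cycle_weight G W2 <= 0 -> False.
Proof.
move=> Hd H1 H2 N1 N2 Hm.
have Ha := Hd _ (walk_cycle H1 N1).
have Hb := Hd _ (walk_cycle H2 N2).
set a := cycle_weight G W1 in Ha Hm; set b := cycle_weight G W2 in Hb Hm.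
have HW : walk G s (rep `|b|%N W1 ++ rep `|a|%N W2) s.
  by apply: walk_cat (rep_walk _ H1) (rep_walk _ H2).
have NW : rep `|b|%N W1 ++ rep `|a|%N W2 != [::].
  case Eb: `|b|%N => [|k]; first by move: Hb; rewrite -absz_eq0 Eb.
  by case: (W1) N1.
have := Hd _ (walk_cycle HW NW).
by rewrite wcat !rep_weight signlem ?eqxx.
Qed.

Theorem proposition1 (V A : finType) (G : wgame V A) :
  wgame_wf G ->
  (divergent G <->
   forall v : V,
     (forall c, is_simple_cycle G c -> cycle_in_scc G v c -> 0 < cycle_weight G c) \/
     (forall c, is_simple_cycle G c -> cycle_in_scc G v c -> cycle_weight G c < 0)).
Proof.
move=> _; split.
- move=> Hd v.
  have key : forall c1 c2, is_simple_cycle G c1 -> cycle_in_scc G v c1 ->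
      is_simple_cycle G c2 -> cycle_in_scc G v c2 ->
      cycle_weight G c1 <= 0 -> 0 <= cycle_weight G c2 -> False.
    move=> [//|e1 c1] [//|e2 c2] /andP [C1 _] S1 /andP [C2 _] S2 Ha Hb.
    have W1 : walk G (esrc e1) (e1 :: c1) (esrc e1) by rewrite -cycle_walkE andbA.
    have W2 : walk G (esrc e2) (e2 :: c2) (esrc e2) by rewrite -cycle_walkE andbA.
    move: S1 S2 => /= /andP [/andP [Hv1 H1v] _] /andP [/andP [Hv2 H2v] _].
    have [P HP] := connect_walk (connect_trans H1v Hv2).
    have [Q HQ] := connect_walk (connect_trans H2v Hv1).
    set a := cycle_weight G (e1 :: c1) in Ha.
    set b := cycle_weight G (e2 :: c2) in Hb.
    have HU : walk G (esrc e1) (P ++ (e2 :: c2) ++ Q) (esrc e1).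
      by apply: walk_cat HP (walk_cat W2 HQ).
    have HV : walk G (esrc e2) (Q ++ (e1 :: c1) ++ P) (esrc e2).
      by apply: walk_cat HQ (walk_cat W1 HP).
    have NU : P ++ (e2 :: c2) ++ Q != [::] by case: (P).
    have NV : Q ++ (e1 :: c1) ++ P != [::] by case: (Q).
    case: (lerP 0 (cycle_weight G (P ++ (e2 :: c2) ++ Q))) => HY.
      apply: (zero_lem Hd W1 HU) => //.
      by rewrite mulr_le0_ge0.
    apply: (zero_lem Hd W2 HV) => //.
    have HX : cycle_weight G (Q ++ (e1 :: c1) ++ P) <= 0.
      move: HY Ha Hb; rewrite !wcat /a /b.
      move: (cycle_weight G P) (cycle_weight G Q) (cycle_weight G (e1 :: c1)) (cycle_weight G (e2 :: c2)) => x y u w HY Ha Hb.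
      have h1 : x + y <= x + (w + y) by rewrite lerD2l lerDr.
      have h2 : y + (u + x) <= y + (0 + x) by rewrite lerD2l lerD2r.
      rewrite add0r (addrC y x) in h2.
      exact: ltW (le_lt_trans h2 (le_lt_trans h1 HY)).
    by rewrite mulrC mulr_le0_ge0.
  case: (classic (forall c, is_simple_cycle G c -> cycle_in_scc G v c -> 0 < cycle_weight G c)) => Hpos; [by left | right].
  move=> c2 S2 I2; rewrite ltNge; apply/negP => Hb; apply: Hpos => c1 S1 I1.
  rewrite ltNge; apply/negP => Ha; exact: key S1 I1 S2 I2 Ha Hb.
- move=> H [//|e c] Hc.
  have Hw : walk G (esrc e) (e :: c) (esrc e) by rewrite -cycle_walkE andbA.
  have Hin := walk_scc Hw.
  case: (H (esrc e)) => Hs.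
  + have Hp : 0 < cycle_weight G (e :: c).
      apply: (@pos_gen V A G (fun x => 0 < x) _ _ Hs (size (e :: c)).+1 (e :: c) (esrc e) (ltnSn _) Hw Hin isT).
      exact: addr_gt0.
    by rewrite gt_eqF.
  + have Hp : cycle_weight G (e :: c) < 0.
      apply: (@pos_gen V A G (fun x => x < 0) _ _ Hs (size (e :: c)).+1 (e :: c) (esrc e) (ltnSn _) Hw Hin isT).
      by move=> a b Ha Hb; rewrite -oppr_gt0 opprD addr_gt0 // oppr_gt0.
    by rewrite lt_eqF.
Qed.
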